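(* Let $G$ be a group, $N$ a normal subgroup, and $S=\bigoplus_{g\in G}S_g$ a nearly epsilon-strongly $G$-graded ring. Fix $C\in G/N$. For any positive integer $n$ and elements $s_{g_1},\dots,s_{g_n}$ with $s_{g_i}\in S_{g_i}$ and $g_i\in C$ for all $i$, there exists $e\in S_CS_{C^{-1}}$ with $es_{g_i}=s_{g_i}$ for all $1\le i\le n$, and there exists $e'\in S_{C^{-1}}S_C$ with $s_{g_i}e'=s_{g_i}$ for all $1\le i\le n$.
   Context: Rings are associative, not necessarily unital; $AB$ denotes finite sums of products. A $G$-grading: $S=\bigoplus_gS_g$, $S_gS_h\subseteq S_{gh}$. The grading is nearly epsilon-strong if $S_gS_{g^{-1}}S_g=S_g$ for all $g$ and each ring $S_gS_{g^{-1}}$ is $s$-unital ($x\in xR\cap Rx$ for all $x$ in the ring $R$); equivalently, for each $g$ and $s\in S_g$ there are $\epsilon\in S_gS_{g^{-1}}$ and $\epsilon'\in S_{g^{-1}}S_g$ with $\epsilon s=s=s\epsilon'$. Induced grading: $S_C=\bigoplus_{g\in C}S_g$. *)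

(* Defs.v *)
From HB Require Import structures.
From mathcomp Require Import all_boot all_order all_algebra.
From Stdlib Require List.
Set Implicit Arguments. Unset Strict Implicit. Unset Printing Implicit Defensive.
Import GRing.Theory.
Local Open Scope ring_scope.

Definition is_group (G : Type) (gm : G -> G -> G) (gi : G -> G) (ge : G) : Prop :=
  [/\ (forall x y z, gm x (gm y z) = gm (gm x y) z),
      (forall x, gm ge x = x /\ gm x ge = x) &
      (forall x, gm (gi x) x = ge /\ gm x (gi x) = ge)].

Definition is_normal_subgroup (G : Type) (gm : G -> G -> G) (gi : G -> G) (ge : G)
  (N : G -> Prop) : Prop :=
  [/\ N ge, (forall x y, N x -> N y -> N (gm x y)), (forall x, N x -> N (gi x)) &
      (forall g x, N x -> N (gm (gm g x) (gi g)))].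

Definition is_coset (G : Type) (gm : G -> G -> G) (gi : G -> G) (N C : G -> Prop) : Prop :=
  exists g, forall x, C x <-> N (gm (gi g) x).

Definition coset_inv (G : Type) (gi : G -> G) (C : G -> Prop) : G -> Prop :=
  fun x => C (gi x).

Definition is_rng (S : zmodType) (mul : S -> S -> S) : Prop :=
  [/\ (forall x y z, mul x (mul y z) = mul (mul x y) z),
      (forall x y z, mul (x + y) z = mul x z + mul y z) &
      (forall x y z, mul x (y + z) = mul x y + mul x z)].

Definition prodset (S : zmodType) (mul : S -> S -> S) (A B : S -> Prop) : S -> Prop :=
  fun x => exists l : seq (S * S),
    (forall p, List.In p l -> A p.1 /\ B p.2) /\ x = \sum_(p <- l) mul p.1 p.2.

Definition s_unital (S : zmodType) (mul : S -> S -> S) (R : S -> Prop) : Prop :=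
  forall x, R x -> (exists r, R r /\ x = mul x r) /\ (exists r, R r /\ x = mul r x).

Definition is_grading (G : Type) (gm : G -> G -> G) (ge : G)
  (S : zmodType) (mul : S -> S -> S) (Sg : G -> S -> Prop) : Prop :=
  [/\
      (forall g, Sg g 0 /\ (forall x y, Sg g x -> Sg g y -> Sg g (x - y))),
      (forall g h x y, Sg g x -> Sg h y -> Sg (gm g h) (mul x y)),
      (forall s, exists l : seq (G * S),
          (forall p, List.In p l -> Sg p.1 p.2) /\ s = \sum_(p <- l) p.2) &
      (* the sum is direct *)
      (forall l : seq (G * S),
          (forall p, List.In p l -> Sg p.1 p.2) ->
          (forall i j, (i < j < size l)%N -> (nth (ge, 0) l i).1 <> (nth (ge, 0) l j).1) ->
          \sum_(p <- l) p.2 = 0 ->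
          forall p, List.In p l -> p.2 = 0)].

Definition nearly_epsilon_strong (G : Type) (gm : G -> G -> G) (gi : G -> G) (ge : G)
  (S : zmodType) (mul : S -> S -> S) (Sg : G -> S -> Prop) : Prop :=
  is_grading gm ge mul Sg /\
  forall g,
    (forall x, prodset mul (prodset mul (Sg g) (Sg (gi g))) (Sg g) x <-> Sg g x) /\
    s_unital mul (prodset mul (Sg g) (Sg (gi g))).

(* induced grading: S_C = ⊕_{g in C} S_g *)
Definition induced (G : Type) (S : zmodType) (Sg : G -> S -> Prop) (C : G -> Prop)
  : S -> Prop :=
  fun x => exists l : seq (G * S),
    (forall p, List.In p l -> C p.1 /\ Sg p.1 p.2) /\ x = \sum_(p <- l) p.2.

(* Main.v *)
Require Import Defs.
From HB Require Import structures.
From mathcomp Require Import all_boot all_order all_algebra.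
From Stdlib Require List.
Set Implicit Arguments. Unset Strict Implicit. Unset Printing Implicit Defensive.
Import GRing.Theory.
Local Open Scope ring_scope.

Lemma big_In_eq (S : zmodType) (I : Type) (l : seq I) (F H : I -> S) :
  (forall p, List.In p l -> F p = H p) -> \sum_(p <- l) F p = \sum_(p <- l) H p.
Proof.
elim: l => [|a l IH] Hp; first by rewrite !big_nil.
rewrite !big_cons Hp /=; last by left.
by rewrite IH // => p Hq; apply: Hp; right.
Qed.

Lemma big_In_closed (S : zmodType) (I : Type) (P : S -> Prop) (l : seq I) (F : I -> S) :
  P 0 -> (forall x y, P x -> P y -> P (x + y)) ->
  (forall p, List.In p l -> P (F p)) -> P (\sum_(p <- l) F p).
Proof.
move=> P0 PD; elim: l => [|a l IH] Hp; first by rewrite big_nil.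
rewrite big_cons; apply: PD; first by apply: Hp; left.
by apply: IH => p Hq; apply: Hp; right.
Qed.

Lemma In_mem (T : eqType) (x : T) (l : seq T) : x \in l -> List.In x l.
Proof.
elim: l => [|a l IH] //; rewrite in_cons => /orP [/eqP -> | H]; [by left | by right; apply: IH].
Qed.


Lemma rng_mul0r (S : zmodType) (mul : S -> S -> S) : is_rng mul -> forall x, mul 0 x = 0.
Proof.
case=> _ Hl _ x; have h := Hl 0 0 x; rewrite addr0 in h.
by apply: (@addrI _ (mul 0 x)); rewrite -h addr0.
Qed.

Lemma rng_mulr0 (S : zmodType) (mul : S -> S -> S) : is_rng mul -> forall x, mul x 0 = 0.
Proof.
case=> _ _ Hr x; have h := Hr x 0 0; rewrite addr0 in h.
by apply: (@addrI _ (mul x 0)); rewrite -h addr0.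
Qed.

Lemma rng_mulNr (S : zmodType) (mul : S -> S -> S) : is_rng mul -> forall x y, mul (- x) y = - mul x y.
Proof.
move=> H x y; apply/eqP; rewrite -subr_eq0 opprK.
case: (H) => _ Hl _; by rewrite -Hl addNr rng_mul0r.
Qed.

Lemma rng_mulrN (S : zmodType) (mul : S -> S -> S) : is_rng mul -> forall x y, mul x (- y) = - mul x y.
Proof.
move=> H x y; apply/eqP; rewrite -subr_eq0 opprK.
case: (H) => _ _ Hr; by rewrite -Hr addNr rng_mulr0.
Qed.

Lemma rng_mulBr (S : zmodType) (mul : S -> S -> S) : is_rng mul -> forall x y z, mul x (y - z) = mul x y - mul x z.
Proof. move=> H x y z; case: (H) => _ _ Hr; by rewrite Hr rng_mulrN. Qed.

Lemma rng_mulBl (S : zmodType) (mul : S -> S -> S) : is_rng mul -> forall x y z, mul (x - y) z = mul x z - mul y z.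
Proof. move=> H x y z; case: (H) => _ Hl _; by rewrite Hl rng_mulNr. Qed.

Lemma rng_suml (S : zmodType) (mul : S -> S -> S) (I : Type) (l : seq I) (F : I -> S) y :
  is_rng mul -> mul (\sum_(p <- l) F p) y = \sum_(p <- l) mul (F p) y.
Proof.
move=> H; elim: l => [|a l IH]; first by rewrite !big_nil rng_mul0r.
case: (H) => _ Hl _; by rewrite !big_cons Hl IH.
Qed.

Lemma rng_sumr (S : zmodType) (mul : S -> S -> S) (I : Type) (l : seq I) (F : I -> S) y :
  is_rng mul -> mul y (\sum_(p <- l) F p) = \sum_(p <- l) mul y (F p).
Proof.
move=> H; elim: l => [|a l IH]; first by rewrite !big_nil rng_mulr0.
case: (H) => _ _ Hr; by rewrite !big_cons Hr IH.
Qed.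

Lemma tomi (S : zmodType) (mul : S -> S -> S) (B R X : S -> Prop) :
  is_rng mul -> R 0 ->
  (forall u v, B u -> R v -> R (u + v - mul v u)) ->
  (forall x, X x -> exists u, B u /\ mul u x = x /\ forall y, X y -> X (y - mul u y)) ->
  forall (I : Type) (l : seq I) (f : I -> S), (forall i, List.In i l -> X (f i)) ->
  exists u, R u /\ forall i, List.In i l -> mul u (f i) = f i.
Proof.
move=> Hr R0 RC XU I; elim=> [|a l IH] f Hf; first by exists 0; split.
have := Hf a (or_introl erefl); move=> Xa; have [u1 [Bu1 [Hu1 Xc]]] := XU _ Xa.
have [v [Rv Hv]] := IH (fun i => f i - mul u1 (f i)) (fun i Hi => Xc _ (Hf i (or_intror Hi))).
exists (u1 + v - mul v u1); split; first exact: RC.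
have key : forall z, mul (u1 + v - mul v u1) z = mul u1 z + mul v (z - mul u1 z).
  move=> z; case: (Hr) => Ha Hl _.
  by rewrite rng_mulBl // Hl -Ha rng_mulBr // addrA.
move=> i [<-|Hi]; rewrite key.
  by rewrite Hu1 subrr rng_mulr0 // addr0.
by rewrite Hv // addrC subrK.
Qed.

Lemma prodset_ind (S : zmodType) (mul : S -> S -> S) (A B P : S -> Prop) x :
  prodset mul A B x -> P 0 -> (forall x y, P x -> P y -> P (x + y)) ->
  (forall a b, A a -> B b -> P (mul a b)) -> P x.
Proof.
move=> [l [Hl ->]] P0 PD Pb; apply: big_In_closed => // p Hp.
by have [] := Hl p Hp; apply: Pb.
Qed.

Lemma prodset_0 (S : zmodType) (mul : S -> S -> S) (A B : S -> Prop) : prodset mul A B 0.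
Proof. by exists [::]; split => //; rewrite big_nil. Qed.

Lemma prodset_D (S : zmodType) (mul : S -> S -> S) (A B : S -> Prop) x y :
  prodset mul A B x -> prodset mul A B y -> prodset mul A B (x + y).
Proof.
move=> [l1 [H1 ->]] [l2 [H2 ->]]; exists (l1 ++ l2); split; last by rewrite big_cat.
by move=> p Hp; case: (List.in_app_or _ _ _ Hp) => ?; [apply: H1 | apply: H2].
Qed.

Lemma prodset_1 (S : zmodType) (mul : S -> S -> S) (A B : S -> Prop) a b :
  A a -> B b -> prodset mul A B (mul a b).
Proof.
move=> Ha Hb; exists [:: (a, b)]; split; last by rewrite big_seq1.
by move=> p [<-|[]].
Qed.

Lemma prodset_mono (S : zmodType) (mul : S -> S -> S) (A B A' B' : S -> Prop) x :
  (forall a, A a -> A' a) -> (forall b, B b -> B' b) ->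
  prodset mul A B x -> prodset mul A' B' x.
Proof.
move=> HA HB Hx; apply: (prodset_ind Hx); [exact: prodset_0 | exact: prodset_D |].
by move=> a b Ha Hb; apply: prodset_1; auto.
Qed.

Lemma prodset_N (S : zmodType) (mul : S -> S -> S) (A B : S -> Prop) x :
  is_rng mul -> (forall b, B b -> B (- b)) -> prodset mul A B x -> prodset mul A B (- x).
Proof.
move=> Hr HB Hx; apply: (prodset_ind (P := fun z => prodset mul A B (- z)) Hx).
- by rewrite oppr0; apply: prodset_0.
- by move=> ? ? ? ?; rewrite opprD; apply: prodset_D.
- by move=> a b Ha Hb; rewrite -rng_mulrN //; apply: prodset_1; auto.
Qed.

Lemma prodset_mulr (S : zmodType) (mul : S -> S -> S) (A B : S -> Prop) v u :
  is_rng mul -> (forall b, B b -> B (mul b u)) -> prodset mul A B v -> prodset mul A B (mul v u).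
Proof.
move=> Hr HB Hx; apply: (prodset_ind (P := fun z => prodset mul A B (mul z u)) Hx).
- by rewrite rng_mul0r //; apply: prodset_0.
- by case: (Hr) => _ Hl _ ? ? ? ?; rewrite Hl; apply: prodset_D.
- by case: (Hr) => Ha _ _ a b ? ?; rewrite -Ha; apply: prodset_1; auto.
Qed.

Lemma induced_ind (G : Type) (S : zmodType) (Sg : G -> S -> Prop) (C : G -> Prop) (P : S -> Prop) x :
  induced Sg C x -> P 0 -> (forall x y, P x -> P y -> P (x + y)) ->
  (forall h y, C h -> Sg h y -> P y) -> P x.
Proof.
move=> [l [Hl ->]] P0 PD Pb; apply: big_In_closed => // p Hp.
by have [] := Hl p Hp; apply: Pb.
Qed.

Lemma induced_0 (G : Type) (S : zmodType) (Sg : G -> S -> Prop) (C : G -> Prop) : induced Sg C 0.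
Proof. by exists [::]; split => //; rewrite big_nil. Qed.

Lemma induced_D (G : Type) (S : zmodType) (Sg : G -> S -> Prop) (C : G -> Prop) x y :
  induced Sg C x -> induced Sg C y -> induced Sg C (x + y).
Proof.
move=> [l1 [H1 ->]] [l2 [H2 ->]]; exists (l1 ++ l2); split; last by rewrite big_cat.
by move=> p Hp; case: (List.in_app_or _ _ _ Hp) => ?; [apply: H1 | apply: H2].
Qed.

Lemma induced_1 (G : Type) (S : zmodType) (Sg : G -> S -> Prop) (C : G -> Prop) h y :
  C h -> Sg h y -> induced Sg C y.
Proof.
move=> Ha Hb; exists [:: (h, y)]; split; last by rewrite big_seq1.
by move=> p [<-|[]].
Qed.

Lemma gigi (G : Type) (gm : G -> G -> G) (gi : G -> G) (ge : G) :
  is_group gm gi ge -> forall g, gi (gi g) = g.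
Proof.
case=> A U V g.
have [_ h1] := U (gi (gi g)). have [h2 _] := V (gi g). have [h3 _] := V g. have [h4 _] := U g.
by rewrite -h1 -h3 A h2 h4.
Qed.

Lemma gcancl (G : Type) (gm : G -> G -> G) (gi : G -> G) (ge : G) :
  is_group gm gi ge -> forall g h, gm (gm g (gi g)) h = h.
Proof. case=> A U V g h; have [_ ->] := V g; by have [-> _] := U h. Qed.

Lemma gcancr (G : Type) (gm : G -> G -> G) (gi : G -> G) (ge : G) :
  is_group gm gi ge -> forall g h, gm (gm h g) (gi g) = h.
Proof. case=> A U V g h; rewrite -A; have [_ ->] := V g; by have [_ ->] := U h. Qed.

Lemma core (G : Type) (gm : G -> G -> G) (gi : G -> G) (ge : G)
  (S : zmodType) (mul : S -> S -> S) (Sg : G -> S -> Prop) (C : G -> Prop) :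
  is_group gm gi ge -> is_rng mul ->
  (forall g, Sg g 0 /\ (forall x y, Sg g x -> Sg g y -> Sg g (x - y))) ->
  (forall g h x y, Sg g x -> Sg h y -> Sg (gm g h) (mul x y)) ->
  (forall g x, Sg g x -> prodset mul (prodset mul (Sg g) (Sg (gi g))) (Sg g) x) ->
  (forall g x, prodset mul (Sg g) (Sg (gi g)) x ->
     exists r, prodset mul (Sg g) (Sg (gi g)) r /\ x = mul r x) ->
  forall (I : Type) (l : seq I) (f : I -> S),
  (forall i, List.In i l -> exists h, C h /\ Sg h (f i)) ->
  exists e, prodset mul (induced Sg C) (induced Sg (coset_inv gi C)) e /\
            forall i, List.In i l -> mul e (f i) = f i.
Proof.
move=> Hg Hr HS HM HU HL.
have S0 g : Sg g 0 by case: (HS g).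
have SB g x y : Sg g x -> Sg g y -> Sg g (x - y) by case: (HS g) => _; apply.
have SN g x : Sg g x -> Sg g (- x) by move=> Hx; rewrite -sub0r; apply: SB.
have SD g x y : Sg g x -> Sg g y -> Sg g (x + y).
  by move=> Hx Hy; rewrite -(opprK y); apply: SB => //; apply: SN.
set R := fun g => prodset mul (Sg g) (Sg (gi g)).
have Lft g h u y : R g u -> Sg h y -> Sg h (mul u y).
  move=> Hu Hy; apply: (prodset_ind (P := fun z => Sg h (mul z y)) Hu).
  - by rewrite rng_mul0r.
  - by case: (Hr) => _ Hl _ ? ? ? ?; rewrite Hl; apply: SD.
  - by move=> a b Ha Hb; rewrite -(gcancl Hg g h); apply: (HM _ _ _ _ _ Hy); apply: HM.
have Rgt g h u y : R g u -> Sg h y -> Sg h (mul y u).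
  move=> Hu Hy; apply: (prodset_ind (P := fun z => Sg h (mul y z)) Hu).
  - by rewrite rng_mulr0.
  - by case: (Hr) => _ _ Hl ? ? ? ?; rewrite Hl; apply: SD.
  - move=> a b Ha Hb; case: (Hr) => Ha' _ _; rewrite Ha' -(gcancr Hg g h).
    by apply: (HM _ _ _ _ _ Hb); apply: HM.
have RN g x : R g x -> R g (- x) by apply: prodset_N => //; apply: SN.
have RB g x y : R g x -> R g y -> R g (x - y) by move=> ? ?; apply: prodset_D => //; apply: RN.
have RM g x y : R g x -> R g y -> R g (mul x y).
  move=> Hx Hy; apply: prodset_mulr => // b Hb; exact: Rgt Hy Hb.
have St1 g (l0 : seq (S * S)) : (forall p, List.In p l0 -> R g p.1) ->
    exists u, R g u /\ forall p, List.In p l0 -> mul u p.1 = p.1.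
  move=> Hl0; apply: (@tomi S mul (R g) (R g) (R g)) => //.
  - exact: prodset_0.
  - by move=> u v Hu Hv; apply: RB; [apply: prodset_D | apply: RM].
  - move=> x Hx; have [r [Hr1 Hr2]] := HL g x Hx; exists r; split => //; split; first by rewrite -Hr2.
    by move=> y Hy; apply: RB => //; apply: RM.
have St2 g x : Sg g x -> exists u, R g u /\ mul u x = x.
  move=> Hx; have [l0 [Hl0 ->]] := HU g x Hx.
  have [u [Hu Hu2]] := St1 g l0 (fun p Hp => proj1 (Hl0 p Hp)).
  exists u; split => //; rewrite rng_sumr //; apply: big_In_eq => p Hp.
  by case: (Hr) => Ha _ _; rewrite Ha Hu2.
set T := prodset mul (induced Sg C) (induced Sg (coset_inv gi C)).
have RT g u : C g -> R g u -> T u.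
  move=> Cg; apply: prodset_mono => a Ha; first exact: (induced_1 Cg).
  by apply: (induced_1 (h := gi g)) => //; rewrite /coset_inv (gigi Hg).
have IN x : induced Sg (coset_inv gi C) x -> induced Sg (coset_inv gi C) (- x).
  move=> Hx; apply: (induced_ind (P := fun z => induced Sg (coset_inv gi C) (- z)) Hx).
  - by rewrite oppr0; apply: induced_0.
  - by move=> ? ? ? ?; rewrite opprD; apply: induced_D.
  - by move=> h y Ch Hy; apply: (induced_1 Ch); apply: SN.
have TM g v u : R g u -> T v -> T (mul v u).
  move=> Hu Hv; apply: prodset_mulr => // b Hb.
  apply: (induced_ind (P := fun z => induced Sg (coset_inv gi C) (mul z u)) Hb).
  - by rewrite rng_mul0r //; apply: induced_0.
  - by case: (Hr) => _ Hl _ ? ? ? ?; rewrite Hl; apply: induced_D.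
  - by move=> h y Ch Hy; apply: (induced_1 Ch); apply: Rgt Hu Hy.
move=> I l f Hf.
apply: (@tomi S mul (fun u => exists g, C g /\ R g u) T (fun y => exists h, C h /\ Sg h y)) => //.
- exact: prodset_0.
- move=> u v [g [Cg Hu]] Hv; apply: prodset_D; first by apply: prodset_D => //; apply: RT Hu.
  by apply: prodset_N => //; apply: TM Hu Hv.
- move=> x [h [Ch Hx]]; have [u [Hu Hux]] := St2 h x Hx; exists u; split; first by exists h.
  split => // y [h' [Ch' Hy]]; exists h'; split => //; apply: SB => //; exact: Lft Hu Hy.
Qed.

Lemma prodset_swap (S : zmodType) (mul : S -> S -> S) (A B : S -> Prop) x :
  prodset (fun x y => mul y x) A B x -> prodset mul B A x.
Proof.
move=> Hx; apply: (prodset_ind Hx); [exact: prodset_0 | exact: prodset_D |].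
by move=> a b Ha Hb; apply: prodset_1.
Qed.

Lemma prodset_swap' (S : zmodType) (mul : S -> S -> S) (A B : S -> Prop) x :
  prodset mul B A x -> prodset (fun x y => mul y x) A B x.
Proof. exact: (@prodset_swap S (fun x y => mul y x) B A x). Qed.

Lemma prodset_assoc (S : zmodType) (mul : S -> S -> S) (A B D : S -> Prop) x :
  is_rng mul -> prodset mul (prodset mul A B) D x -> prodset mul A (prodset mul B D) x.
Proof.
move=> Hr Hx; apply: (prodset_ind Hx); [exact: prodset_0 | exact: prodset_D |].
move=> a' d Ha' Hd.
apply: (prodset_ind (P := fun z => prodset mul A (prodset mul B D) (mul z d)) Ha').
- by rewrite rng_mul0r //; apply: prodset_0.
- by case: (Hr) => _ Hl _ ? ? ? ?; rewrite Hl; apply: prodset_D.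
- move=> a b Ha Hb; case: (Hr) => Has _ _; rewrite -Has.
  by apply: prodset_1 => //; apply: prodset_1.
Qed.

Theorem lemma5p7 (G : Type) (gm : G -> G -> G) (gi : G -> G) (ge : G)
  (N : G -> Prop) (S : zmodType) (mul : S -> S -> S) (Sg : G -> S -> Prop)
  (C : G -> Prop) :
  is_group gm gi ge ->
  is_normal_subgroup gm gi ge N ->
  is_rng mul ->
  nearly_epsilon_strong gm gi ge mul Sg ->
  is_coset gm gi N C ->
  forall (n : nat) (g : 'I_n -> G) (s : 'I_n -> S),
    (0 < n)%N ->
    (forall i, C (g i) /\ Sg (g i) (s i)) ->
    (exists e, prodset mul (induced Sg C) (induced Sg (coset_inv gi C)) e /\
               forall i, mul e (s i) = s i) /\
    (exists e', prodset mul (induced Sg (coset_inv gi C)) (induced Sg C) e' /\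
               forall i, mul (s i) e' = s i).
Proof.
move=> Hg _ Hr [[HS HM _ _] Hne] _ n g s _ Hs.
have Hf : forall i, List.In i (enum 'I_n) -> exists h, C h /\ Sg h (s i).
  by move=> i _; exists (g i).
have Hin : forall i : 'I_n, List.In i (enum 'I_n) by move=> i; apply: In_mem; rewrite mem_enum.
split.
  have [e [He1 He2]] := core Hg Hr HS HM
    (fun g x Hx => proj2 (proj1 (Hne g) x) Hx)
    (fun g x Hx => proj2 (proj2 (Hne g) x Hx)) Hf.
  by exists e; split => // i; apply: He2.
have Hg' : is_group (fun x y => gm y x) gi ge.
  case: Hg => A U V; split.
  - by move=> x y z; rewrite A.
  - by move=> x; have [? ?] := U x; split.
  - by move=> x; have [? ?] := V x; split.
have Hr' : is_rng (fun x y => mul y x).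
  case: Hr => A L R; split.
  - by move=> x y z; rewrite A.
  - by move=> x y z; rewrite R.
  - by move=> x y z; rewrite L.
have HM' : forall g h x y, Sg g x -> Sg h y -> Sg ((fun x y => gm y x) g h) ((fun x y => mul y x) x y).
  by move=> g1 h x y Hx Hy; apply: HM.
have HU' : forall g x, Sg g x -> prodset (fun x y => mul y x)
     (prodset (fun x y => mul y x) (Sg g) (Sg (gi g))) (Sg g) x.
  move=> g1 x Hx; apply: prodset_swap'.
  apply: (prodset_mono (A := Sg g1) (B := prodset mul (Sg (gi g1)) (Sg g1))) => //.
    by move=> b Hb; apply: prodset_swap'.
  by apply: prodset_assoc => //; apply: (proj2 (proj1 (Hne g1) x)).
have HL' : forall g x, prodset (fun x y => mul y x) (Sg g) (Sg (gi g)) x ->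
     exists r, prodset (fun x y => mul y x) (Sg g) (Sg (gi g)) r /\ x = (fun x y => mul y x) r x.
  move=> g1 x Hx; have Hx' := prodset_swap Hx.
  have := proj2 (Hne (gi g1)) x; rewrite (gigi Hg) => /(_ Hx') [[r [Hr1 Hr2]] _].
  by exists r; split => //; apply: prodset_swap'.
have [e [He1 He2]] := core Hg' Hr' HS HM' HU' HL' Hf.
exists e; split; last by move=> i; apply: He2.
exact: prodset_swap He1.
Qed.
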